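(* A finite skew brace $A$ has $\Lambda(A)$ with exactly one vertex if and only if $A$ is isomorphic to a skew brace on a set $F\times\mathbb{Z}/2\mathbb{Z}$ with operations \[(f_1,k_1)+(f_2,k_2)=\big(f_1+(-1)^{k_1}f_2+k_1k_2y,\,k_1+k_2\big),\] \[(f_1,k_1)\circ(f_2,k_2)=\big(f_1+(-1)^{k_1}f_2+\psi(f_1,k_1,k_2)+k_1k_2y,\,k_1+k_2\big),\] where $F\neq\{0\}$ is a finite abelian group, $y\in F$ satisfies $2y=0$, and $\psi\colon F\times\mathbb{Z}/2\mathbb{Z}\times\mathbb{Z}/2\mathbb{Z}\to F$ is a surjective map of the form \[\psi(f,k_1,k_2)=[k_2]\big(\phi(f)-[k_1]z\big),\] with $\phi\in\operatorname{End}(F)$ and $z\in F$ satisfying $\phi(z)=\phi(y)-2z$ and $\phi(\phi(f))=-2\phi(f)$ for all $f\in F$.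
   Context: A skew brace is a triple $(A,+,\circ)$ where $(A,+)$ and $(A,\circ)$ are groups with $a\circ(b+c)=a\circ b-a+a\circ c$. $\lambda_a(b)=-a+a\circ b$ defines an action of $(A,\circ)$ on $(A,+)$ by automorphisms. $\Lambda(A)$ is the graph whose vertices are the $\lambda$-orbits of size $>1$, two distinct vertices $L_1,L_2$ adjacent iff $\gcd(|L_1|,|L_2|)\ne1$. For $k\in\mathbb{Z}/2\mathbb{Z}$, $[k]\in\{0,1\}$ denotes its representative (equivalently $[k]=\frac{1-(-1)^k}{2}$); products such as $k_1k_2y$ mean $[k_1][k_2]y$ and $(-1)^k$ is computed with any representative. *)

(* Defs.v *)
From HB Require Import structures.
From mathcomp Require Import all_boot all_order all_algebra.
Set Implicit Arguments. Unset Strict Implicit. Unset Printing Implicit Defensive.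
Import GRing.Theory.
Local Open Scope ring_scope.

Record skew_brace (T : Type) := SkewBrace {
  sb_add : T -> T -> T;
  sb_zero : T;
  sb_opp : T -> T;
  sb_circ : T -> T -> T;
  sb_one : T;
  sb_inv : T -> T;
  sb_addA : associative sb_add;
  sb_add0x : left_id sb_zero sb_add;
  sb_addx0 : right_id sb_zero sb_add;
  sb_addNx : forall x, sb_add (sb_opp x) x = sb_zero;
  sb_addxN : forall x, sb_add x (sb_opp x) = sb_zero;
  sb_circA : associative sb_circ;
  sb_circ1x : left_id sb_one sb_circ;
  sb_circx1 : right_id sb_one sb_circ;
  sb_circVx : forall x, sb_circ (sb_inv x) x = sb_one;
  sb_circxV : forall x, sb_circ x (sb_inv x) = sb_one;
  sb_compat : forall a b c,
    sb_circ a (sb_add b c) = sb_add (sb_add (sb_circ a b) (sb_opp a)) (sb_circ a c)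
}.

Section Lambda.
Variables (T : finType) (A : skew_brace T).

Definition sb_lambda (a b : T) : T := sb_add A (sb_opp A a) (sb_circ A a b).

Definition lambda_orbit (b : T) : {set T} := [set sb_lambda a b | a : T]%N.

Definition Lambda_vertices : {set {set T}} :=
  [set L in [set lambda_orbit b | b : T] | (1 < #|L|)%N].

(* adjacency of Lambda(A) (not needed for the vertex count) *)
Definition Lambda_adj (L1 L2 : {set T}) : bool :=
  [&& L1 \in Lambda_vertices, L2 \in Lambda_vertices, L1 != L2 &
      gcdn #|L1| #|L2| != 1%N].
End Lambda.

Definition sb_iso_to (T T' : Type) (A : skew_brace T)
  (add' circ' : T' -> T' -> T') : Prop :=
  exists f : T -> T', bijective f /\
    forall a b, f (sb_add A a b) = add' (f a) (f b) /\
                f (sb_circ A a b) = circ' (f a) (f b).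

Section Model.
Variables (F : zmodType) (y : F) (psi : F -> 'Z_2 -> 'Z_2 -> F).

Definition sgnZ2 (k : 'Z_2) (f : F) : F := f *~ ((-1) ^+ (nat_of_ord k)).

Definition model_add (p q : F * 'Z_2) : F * 'Z_2 :=
  (p.1 + sgnZ2 p.2 q.1 + y *+ (nat_of_ord p.2 * nat_of_ord q.2), p.2 + q.2).

Definition model_circ (p q : F * 'Z_2) : F * 'Z_2 :=
  (p.1 + sgnZ2 p.2 q.1 + psi p.1 p.2 q.2 + y *+ (nat_of_ord p.2 * nat_of_ord q.2),
   p.2 + q.2).
End Model.

Definition model_psi (F : zmodType) (phi : F -> F) (z : F)
  (f : F) (k1 k2 : 'Z_2) : F :=
  (phi f - z *+ nat_of_ord k1) *+ nat_of_ord k2.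

(* Main.v *)
Require Import Defs.
From HB Require Import structures.
From mathcomp Require Import all_boot all_order all_algebra.
Import GRing.Theory.

Module SBBasic.


Section Basic.
Variables (T : finType) (A : skew_brace T).
Local Notation "x ⊕ y" := (sb_add A x y) (at level 50, left associativity).
Local Notation "x ⊙ y" := (sb_circ A x y) (at level 40, left associativity).
Local Notation "⊖ x" := (sb_opp A x) (at level 35, right associativity).
Local Notation o0 := (sb_zero A).
Local Notation lam := (sb_lambda A).

Lemma sb_addKl a b : ⊖ a ⊕ (a ⊕ b) = b.
Proof. by rewrite sb_addA sb_addNx sb_add0x. Qed.
Lemma sb_addNKl a b : a ⊕ (⊖ a ⊕ b) = b.
Proof. by rewrite sb_addA sb_addxN sb_add0x. Qed.
Lemma sb_addKr a b : b ⊕ a ⊕ ⊖ a = b.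
Proof. by rewrite -sb_addA sb_addxN sb_addx0. Qed.
Lemma sb_addNKr a b : b ⊕ ⊖ a ⊕ a = b.
Proof. by rewrite -sb_addA sb_addNx sb_addx0. Qed.
Lemma sb_addIl a b c : a ⊕ b = a ⊕ c -> b = c.
Proof. by move=> h; rewrite -(sb_addKl a b) h sb_addKl. Qed.
Lemma sb_addIr a b c : b ⊕ a = c ⊕ a -> b = c.
Proof. by move=> h; rewrite -(sb_addKr a b) h sb_addKr. Qed.
Lemma sb_oppK a : ⊖ ⊖ a = a.
Proof. by apply: (sb_addIl (⊖ a)); rewrite sb_addxN sb_addNx. Qed.
Lemma sb_opp0 : ⊖ o0 = o0.
Proof. by rewrite -{2}(sb_addNx A o0) sb_addx0. Qed.
Lemma sb_oppD a b : ⊖ (a ⊕ b) = ⊖ b ⊕ ⊖ a.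
Proof.
apply: (sb_addIl (a ⊕ b)); rewrite sb_addxN -sb_addA (sb_addA _ b).
by rewrite sb_addxN sb_add0x sb_addxN.
Qed.
Lemma sb_opp_eq a b : a ⊕ b = o0 -> b = ⊖ a.
Proof. by move=> h; apply: (sb_addIl a); rewrite h sb_addxN. Qed.

Lemma sb_circx0 a : a ⊙ o0 = a.
Proof.
have := sb_compat A a o0 o0; rewrite sb_add0x -{1}(sb_add0x A (a ⊙ o0)).
move/sb_addIr => h.
by rewrite -(sb_addNKr a (a ⊙ o0)) -h sb_add0x.
Qed.
Lemma sb_one0 : sb_one A = o0.
Proof. by rewrite -(sb_circx0 (sb_one A)) sb_circ1x. Qed.
Lemma sb_circ0x a : o0 ⊙ a = a.
Proof. by rewrite -sb_one0 sb_circ1x. Qed.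

Lemma lamE a b : a ⊕ lam a b = a ⊙ b.
Proof. by rewrite /sb_lambda sb_addNKl. Qed.
Lemma lamD a b c : lam a (b ⊕ c) = lam a b ⊕ lam a c.
Proof. by rewrite /sb_lambda sb_compat !sb_addA. Qed.
Lemma lam0 a : lam a o0 = o0.
Proof. by rewrite /sb_lambda sb_circx0 sb_addNx. Qed.
Lemma lamN a b : lam a (⊖ b) = ⊖ lam a b.
Proof. by apply: (@sb_opp_eq (lam a b)); rewrite -lamD sb_addxN lam0. Qed.
Lemma lam0x b : lam o0 b = b.
Proof. by rewrite /sb_lambda sb_opp0 sb_circ0x sb_add0x. Qed.
Lemma lamM a b c : lam (a ⊙ b) c = lam a (lam b c).
Proof.
rewrite [lam b c]/sb_lambda lamD lamN /sb_lambda sb_circA sb_oppD sb_oppK.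
by rewrite !sb_addA sb_addKr.
Qed.
Lemma lamK a b : lam (sb_inv A a) (lam a b) = b.
Proof. by rewrite -lamM sb_circVx sb_one0 lam0x. Qed.

(* orbit-stabilizer *)
Lemma orbit_card_dvd t : (#|lambda_orbit A t| %| #|T|)%N.
Proof.
pose S := [set a | lam a t == t].
suff -> : #|T| = (#|lambda_orbit A t| * #|S|)%N by apply: dvdn_mulr.
rewrite -[#|T|]sum1_card (partition_big_imset (fun a => lam a t)) /=.
rewrite -sum_nat_const; apply: eq_bigr => o /imsetP [b _ ->].
rewrite sum1_card.
have inj : injective (sb_circ A b).
  move=> a1 a2 h.
  by rewrite -(sb_circ1x A a1) -(sb_circVx A b) -sb_circA h sb_circA sb_circVx sb_circ1x.
rewrite -(card_imset S inj); apply: eq_card => x; apply/eqP/imsetP.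
- move=> hx; exists (sb_inv A b ⊙ x); last by rewrite sb_circA sb_circxV sb_one0 sb_circ0x.
  by rewrite inE lamM hx lamK.
- by move=> [a]; rewrite inE => /eqP ha ->; rewrite lamM ha.
Qed.

Definition lfix : {set T} := [set b | [forall a, lam a b == b]].

Lemma fixP b : reflect (forall a, lam a b = b) (b \in lfix).
Proof. by rewrite inE; apply: (iffP forallP) => h a; apply/eqP. Qed.
Lemma fix0 : o0 \in lfix.
Proof. by apply/fixP => a; rewrite lam0. Qed.
Lemma fixD a b : a \in lfix -> b \in lfix -> a ⊕ b \in lfix.
Proof. by move=> /fixP ha /fixP hb; apply/fixP => c; rewrite lamD ha hb. Qed.
Lemma fixN a : a \in lfix -> ⊖ a \in lfix.
Proof. by move=> /fixP ha; apply/fixP => c; rewrite lamN ha. Qed.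
Lemma fixDr a b : a \in lfix -> a ⊕ b \in lfix -> b \in lfix.
Proof. by move=> ha hab; rewrite -(sb_addKl a b); apply: fixD => //; apply: fixN. Qed.
Lemma fixDl a b : b \in lfix -> a ⊕ b \in lfix -> a \in lfix.
Proof. by move=> hb hab; rewrite -(sb_addKr b a); apply: fixD => //; apply: fixN. Qed.
Lemma orbit_self b : b \in lambda_orbit A b.
Proof. by apply/imsetP; exists o0; rewrite ?lam0x. Qed.
Lemma orbit_fix b : b \in lfix -> lambda_orbit A b = [set b].
Proof.
move=> /fixP hb; apply/setP => x; rewrite inE; apply/imsetP/eqP.
  by move=> [a _ ->]; rewrite hb.
by move=> ->; exists o0; rewrite ?lam0x.
Qed.
Lemma orbit_nfix b : b \notin lfix -> (1 < #|lambda_orbit A b|)%N.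
Proof.
move=> hb; have [a ha] : exists a, lam a b != b.
  apply/existsP; move: hb; rewrite inE negb_forall => /existsP [a ha].
  by apply/existsP; exists a.
rewrite (cardsD1 b) orbit_self add1n ltnS card_gt0; apply/set0Pn.
by exists (lam a b); rewrite !inE ha; apply/imsetP; exists a.
Qed.
Lemma orbit_mem b x : x \in lambda_orbit A b -> exists a, x = lam a b.
Proof. by move=> /imsetP [a _ ->]; exists a. Qed.
Lemma orbit_fixN b x : b \notin lfix -> x \in lambda_orbit A b -> x \notin lfix.
Proof.
move=> hb /imsetP [a _ ->]; apply: contra hb => /fixP h.
have -> : b = lam a b by rewrite -{1}(lamK a b) h.
by apply/fixP.
Qed.
End Basic.

Arguments sb_addKl {T A}.
Arguments sb_addNKl {T A}.
Arguments sb_addKr {T A}.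
Arguments sb_addNKr {T A}.
Arguments sb_addIl {T A a b c}.
Arguments sb_addIr {T A a b c}.
Arguments sb_oppK {T A}.
Arguments sb_opp0 {T A}.
Arguments sb_oppD {T A}.
Arguments sb_opp_eq {T A a b}.
Arguments sb_circx0 {T A}.
Arguments sb_one0 {T A}.
Arguments sb_circ0x {T A}.
Arguments lamE {T A}.
Arguments lamD {T A}.
Arguments lam0 {T A}.
Arguments lamN {T A}.
Arguments lam0x {T A}.
Arguments lamM {T A}.
Arguments lamK {T A}.
Arguments orbit_card_dvd {T A}.
Arguments fixP {T A}.
Arguments fix0 {T A}.
Arguments fixD {T A a b}.
Arguments fixN {T A a}.
Arguments fixDr {T A a b}.
Arguments fixDl {T A a b}.
Arguments orbit_self {T A}.
Arguments orbit_fix {T A b}.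
Arguments orbit_nfix {T A b}.
Arguments orbit_mem {T A b x}.
Arguments orbit_fixN {T A b x}.
Arguments lfix {T} A.

End SBBasic.
Import SBBasic.

Module SBAlg.
Local Open Scope ring_scope.
Lemma alg1 (V : zmodType) (a b c : V) : c - (a - b) = a + c -> b = a *+ 2.
Proof.
move=> e; have : b = c - (a - b) - c + a.
  by rewrite (addrAC c (- (a - b)) (- c)) subrr add0r opprB subrK.
by rewrite e addrK mulr2n.
Qed.
Lemma alg2 (V : zmodType) (Y B c : V) : Y + B = c + c -> B = - Y - (- c) *+ 2.
Proof. by move=> e; rewrite mulNrn opprK mulr2n -e addKr. Qed.

Lemma Z2_cases (k : 'Z_2) : k = 0 \/ k = 1.
Proof.
case: k => [[|[|m]] hm]; [left|right|by []]; exact: val_inj.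
Qed.
Lemma Z2v0 : nat_of_ord (0 : 'Z_2) = 0%N. Proof. by []. Qed.
Lemma Z2v1 : nat_of_ord (1 : 'Z_2) = 1%N. Proof. by []. Qed.
Lemma Z2_11 : (1 + 1 : 'Z_2) = 0. Proof. exact: val_inj. Qed.

Lemma sgn0 (V : zmodType) (f : V) : sgnZ2 0 f = f.
Proof. by rewrite /sgnZ2 Z2v0 expr0 mulr1z. Qed.
Lemma sgn1 (V : zmodType) (f : V) : sgnZ2 1 f = - f.
Proof. by rewrite /sgnZ2 Z2v1 expr1 mulrN1z. Qed.
Arguments alg1 {V a b c}.
Arguments alg2 {V Y B c}.
Lemma alg3 (V : zmodType) (a b c d y : V) : a - b + (- c - - d) + y = a - (b - (d - c)) + y.
Proof.
congr (_ + _); rewrite opprK !opprB addrC (addrC (- c) d) addrA.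
by rewrite [RHS]addrA (addrC a).
Qed.
Arguments alg3 {V}.

End SBAlg.
Import SBAlg.

Module SBFwd.
Local Open Scope ring_scope.

Section Forward.
Variables (T : finType) (A : skew_brace T) (t : T).
Local Notation "x ⊕ y" := (sb_add A x y) (at level 50, left associativity).
Local Notation "x ⊙ y" := (sb_circ A x y) (at level 40, left associativity).
Local Notation "⊖ x" := (sb_opp A x) (at level 35, right associativity).
Local Notation o0 := (sb_zero A).
Local Notation lam := (sb_lambda A).
Local Notation H := (lfix A).
Hypothesis ht : t \notin H.
Hypothesis hO : forall x, x \notin H -> x \in lambda_orbit A t.

Lemma tH h : h \in H -> t ⊕ h \notin H.
Proof. by move=> hh; apply: contra ht => h2; apply: (fixDl hh h2). Qed.
Arguments tH {h}.

Lemma cosetE : [set t ⊕ h | h in H] = ~: H.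
Proof.
have sub : [set t ⊕ h | h in H] \subset ~: H.
  by apply/subsetP => x /imsetP [h hh ->]; rewrite inE tH.
have inj : injective (sb_add A t) by move=> a b; apply: sb_addIl.
have cC : ~: H = lambda_orbit A t.
  apply/setP => x; rewrite inE; apply/idP/idP; first exact: hO.
  exact: orbit_fixN.
apply/eqP; rewrite eqEcard sub /= card_imset //.
have := @orbit_card_dvd T A t; rewrite -cC -(cardsC H) => hd; rewrite dvdn_addl // in hd.
apply: dvdn_leq hd; rewrite card_gt0; apply/set0Pn; exists o0; exact: fix0.
Qed.

Lemma decomp x : x \notin H -> exists2 h, h \in H & x = t ⊕ h.
Proof.
move=> hx; have : x \in ~: H by rewrite inE.
by rewrite -cosetE => /imsetP [h ? ->]; exists h.
Qed.
Arguments decomp {x}.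

Definition hh a := ⊖ t ⊕ lam a t.

Lemma hhH a : hh a \in H.
Proof.
have : lam a t \notin H by apply: (orbit_fixN ht); apply/imsetP; exists a.
by move/decomp => [h hH e]; rewrite /hh e sb_addKl.
Qed.

Lemma lam_t a : lam a t = t ⊕ hh a.
Proof. by rewrite /hh sb_addNKl. Qed.

Lemma hh_surj w : w \in H -> exists a, hh a = w.
Proof.
move=> wH; have /hO/orbit_mem [a ha] := tH wH.
by exists a; rewrite /hh -ha sb_addKl.
Qed.
Arguments hh_surj {w}.

Lemma ttH : t ⊕ t \in H.
Proof.
apply/negPn/negP => /decomp [h hH] /sb_addIl eth.
by move: ht; rewrite eth hH.
Qed.

Lemma conj h : h \in H -> h ⊕ t ⊕ h = t.
Proof.
move=> hH; have [a ha] := hh_surj hH.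
have /fixP e := ttH; have := e a; rewrite lamD lam_t ha -!sb_addA => /sb_addIl.
by rewrite !sb_addA.
Qed.
Arguments conj {h}.

Lemma tC h : h \in H -> t ⊕ h = ⊖ h ⊕ t.
Proof.
move=> hH; have := conj (fixN hH) => e.
by rewrite -{1}e sb_addNKr.
Qed.
Arguments tC {h}.

Lemma tC' h : h \in H -> h ⊕ t = t ⊕ ⊖ h.
Proof. by move=> hH; rewrite tC ?sb_oppK //; apply: fixN. Qed.
Arguments tC' {h}.

Lemma HC h1 h2 : h1 \in H -> h2 \in H -> h1 ⊕ h2 = h2 ⊕ h1.
Proof.
move=> h1H h2H.
have e1 := tC' (fixD h1H h2H).
have e2 : h1 ⊕ h2 ⊕ t = t ⊕ ⊖ h1 ⊕ ⊖ h2 by rewrite -sb_addA tC' // sb_addA tC'.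
rewrite e2 sb_oppD sb_addA -!sb_addA in e1.
have {}e1 := sb_addIl e1.
rewrite -(@sb_oppK _ A (h1 ⊕ h2)) -(@sb_oppK _ A (h2 ⊕ h1)); congr (sb_opp A _).
by rewrite !sb_oppD e1.
Qed.
Arguments HC {h1 h2}.

Lemma hhM a b : hh (a ⊙ b) = hh a ⊕ hh b.
Proof.
rewrite {1}/hh lamM lam_t lamD lam_t.
have /fixP -> := hhH b.
by rewrite sb_addA sb_addKl.
Qed.

Lemma circH h1 h2 : h1 \in H -> h1 ⊙ h2 = h1 ⊕ h2 \/ True.
Proof. by right. Qed.

Lemma circ_fix a h : h \in H -> a ⊙ h = a ⊕ h.
Proof. by move=> /fixP hH; rewrite -lamE hH. Qed.
Arguments circ_fix {a h}.

Lemma hh0 : hh o0 = o0.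
Proof. by rewrite /hh lam0x sb_addNx. Qed.

Lemma hhN h : h \in H -> hh (⊖ h) = ⊖ hh h.
Proof.
move=> hH; apply: sb_opp_eq; rewrite -hhM circ_fix ?sb_addxN ?hh0 //.
exact: fixN.
Qed.
Arguments hhN {h}.


Definition Fty := {x : T | x \in H}.
HB.instance Definition _ := Finite.on Fty.

Definition Fzero : Fty := exist _ o0 (@fix0 _ A).
Definition Fadd (x y : Fty) : Fty := exist _ (val x ⊕ val y) (fixD (valP x) (valP y)).
Definition Fopp (x : Fty) : Fty := exist _ (⊖ val x) (fixN (valP x)).

Lemma FaddA : associative Fadd.
Proof. by move=> x y w; apply: val_inj; rewrite /= sb_addA. Qed.
Lemma FaddC : commutative Fadd.
Proof. by move=> x y; apply: val_inj; rewrite /= (HC (valP x) (valP y)). Qed.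
Lemma Fadd0 : left_id Fzero Fadd.
Proof. by move=> x; apply: val_inj; rewrite /= sb_add0x. Qed.
Lemma FaddN : left_inverse Fzero Fopp Fadd.
Proof. by move=> x; apply: val_inj; rewrite /= sb_addNx. Qed.

HB.instance Definition _ := GRing.isZmodule.Build Fty FaddA FaddC Fadd0 FaddN.

Lemma valD (u v : Fty) : val (u + v)%R = val u ⊕ val v. Proof. by []. Qed.
Lemma valN (u : Fty) : val (- u)%R = ⊖ val u. Proof. by []. Qed.
Lemma val0 : val (0 : Fty) = o0. Proof. by []. Qed.

Definition toF (x : T) : Fty := insubd (0 : Fty) x.
Lemma toFK x : x \in H -> val (toF x) = x.
Proof. by move=> hx; rewrite val_insubd hx. Qed.
Lemma toFval (u : Fty) : toF (val u) = u.
Proof. exact: valKd. Qed.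

Definition hF a := toF (hh a).
Lemma hFE a : val (hF a) = hh a.
Proof. exact: toFK (hhH a). Qed.

Lemma hFM a b : hF (a ⊙ b) = (hF a + hF b)%R.
Proof. by apply: val_inj; rewrite valD !hFE hhM. Qed.
Lemma hFD (u v : Fty) : hF (val (u + v)%R) = (hF (val u) + hF (val v))%R.
Proof. by rewrite valD -hFM circ_fix // (valP v). Qed.
Lemma hFN (u : Fty) : hF (val (- u)%R) = (- hF (val u))%R.
Proof. by apply: val_inj; rewrite [RHS]valN !hFE valN hhN // (valP u). Qed.

Lemma tCu (u : Fty) : t ⊕ val u = val (- u)%R ⊕ t.
Proof. by rewrite (tC (valP u)). Qed.

Lemma hFt (u : Fty) : hF (val u ⊕ t) = (hF t - hF (val u))%R.
Proof.
have -> : val u ⊕ t = t ⊙ val (- u)%R by rewrite circ_fix ?(valP (- u)%R) // tCu opprK.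
by rewrite hFM hFN.
Qed.

Lemma lamt a (u : Fty) : lam a (val u ⊕ t) = val (u - hF a)%R ⊕ t.
Proof.
have /fixP e := valP u.
by rewrite lamD e lam_t (tC (hhH a)) sb_addA valD valN hFE.
Qed.

Lemma E3 (u v : Fty) : val u ⊕ t ⊕ val v = val (u - v)%R ⊕ t.
Proof. by rewrite -sb_addA tCu sb_addA. Qed.

Definition yF : Fty := toF (t ⊕ t).
Lemma yFE : val yF = t ⊕ t. Proof. exact: toFK ttH. Qed.

Lemma E4 (u v : Fty) : val u ⊕ t ⊕ (val v ⊕ t) = val (u - v + yF)%R.
Proof. by rewrite sb_addA E3 [RHS]valD yFE sb_addA. Qed.


Definition phi_fun (u : Fty) : Fty := - hF (val u).
Lemma phi_morph : zmod_morphism phi_fun.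
Proof. by move=> u v; rewrite /phi_fun hFD hFN opprD opprK. Qed.
HB.instance Definition _ := GRing.isZmodMorphism.Build Fty Fty phi_fun phi_morph.

Definition zF : Fty := - hF t.

Lemma ct (u : Fty) : val u ⊙ t = val (u - hF (val u)) ⊕ t.
Proof. by rewrite -lamE lam_t (tC (hhH _)) sb_addA valD valN hFE. Qed.

Lemma hFhF (u : Fty) : hF (val (hF (val u))) = hF (val u) *+ 2.
Proof.
have e1 := hFM (val u) t.
rewrite ct hFt hFD hFN in e1.
exact: alg1 e1.
Qed.

Lemma hFz : phi_fun zF = phi_fun yF - zF *+ 2.
Proof.
have e1 := hFM t t.
have e2 : t ⊙ t = val (yF + hF t) by rewrite -lamE lam_t sb_addA valD yFE hFE.
rewrite e2 hFD in e1.
by rewrite /phi_fun /zF hFN opprK (alg2 e1).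
Qed.

Lemma y2 : yF *+ 2 = 0.
Proof.
apply: val_inj; rewrite mulr2n valD yFE val0.
have e := conj ttH.
suff e' : t ⊕ (t ⊕ t ⊕ (t ⊕ t)) = t ⊕ o0 by exact: (sb_addIl e').
have e3 : t ⊕ (t ⊕ t) = t ⊕ t ⊕ t by rewrite sb_addA.
by rewrite sb_addx0 sb_addA e3.
Qed.

Lemma phiphi (f : Fty) : phi_fun (phi_fun f) = - (phi_fun f *+ 2).
Proof. by rewrite /phi_fun hFN opprK hFhF mulNrn opprK. Qed.

Lemma psi_surj (g : Fty) : exists (f : Fty) (k1 k2 : 'Z_2), model_psi phi_fun zF f k1 k2 = g.
Proof.
have [a ha] := hh_surj (valP g).
have hg : hF a = g by apply: val_inj; rewrite hFE.
case: (boolP (a \in H)) => aH.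
  exists (- toF a), 0, 1; rewrite /model_psi Z2v0 Z2v1 mulr0n subr0 mulr1n.
  by rewrite /phi_fun hFN opprK toFK.
have [h hH ea] := decomp aH.
exists (toF (⊖ h)), 1, 1; rewrite /model_psi Z2v1 !mulr1n.
rewrite /phi_fun /zF opprK addrC -hFt toFK ?fixN // -(tC hH) -ea //.
Qed.


Lemma F_nontriv : exists f : Fty, f != 0.
Proof.
have c1 := orbit_nfix ht.
have cH : #|H| = #|lambda_orbit A t|.
  have -> : lambda_orbit A t = ~: H.
    apply/setP => x; rewrite inE; apply/idP/idP; last exact: hO.
    exact: orbit_fixN.
  rewrite -cosetE card_imset //; move=> a b; apply: sb_addIl.
rewrite -cH (cardsD1 o0) fix0 add1n ltnS card_gt0 in c1.
have [h] := set0Pn _ c1; rewrite in_setD1 => /andP [hn hH].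
by exists (toF h); apply: contra hn => /eqP e; rewrite -(toFK _ hH) e.
Qed.

Definition fmap (x : T) : Fty * 'Z_2 :=
  if x \in H then (toF x, 0) else (toF (x ⊕ ⊖ t), 1).
Definition gmap (p : Fty * 'Z_2) : T :=
  if nat_of_ord p.2 == 0%N then val p.1 else val p.1 ⊕ t.
Lemma gmap0 u : gmap (u, 0) = val u. Proof. by []. Qed.
Lemma gmap1 u : gmap (u, 1) = val u ⊕ t. Proof. by []. Qed.

Lemma fmapK : cancel fmap gmap.
Proof.
move=> x; rewrite /fmap; case: ifP => hx; first by rewrite gmap0 toFK.
have [h hH ex] := decomp (negbT hx).
have e : x ⊕ ⊖ t = ⊖ h by rewrite ex (tC hH) sb_addKr.
by rewrite gmap1 toFK e ?fixN // -e sb_addNKr.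
Qed.

Lemma gmapK : cancel gmap fmap.
Proof.
move=> [u k]; case: (Z2_cases k) => ->.
  by rewrite gmap0 /fmap (valP u) toFval.
have hx : val u ⊕ t \notin H by apply: contra ht; apply: fixDr (valP u).
by rewrite gmap1 /fmap (negbTE hx) sb_addKr toFval.
Qed.

Lemma gadd p q : gmap (model_add yF p q) = gmap p ⊕ gmap q.
Proof.
case: p q => [u1 k1] [u2 k2]; case: (Z2_cases k1) => ->; case: (Z2_cases k2) => ->;
  rewrite /model_add /= ?Z2v0 ?Z2v1 ?sgn0 ?sgn1 ?add0r ?addr0 ?Z2_11 ?mulr0n ?mulr1n
    ?gmap0 ?gmap1.
all: by rewrite ?E3 ?E4 ?valD ?sb_addA.
Qed.

Lemma gcirc p q : gmap (model_circ yF (model_psi phi_fun zF) p q) = gmap p ⊙ gmap q.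
Proof.
case: p q => [u1 k1] [u2 k2]; case: (Z2_cases k1) => ->; case: (Z2_cases k2) => ->;
  rewrite /model_circ /model_psi /= ?Z2v0 ?Z2v1 ?sgn0 ?sgn1 ?add0r ?addr0 ?Z2_11 ?mulr0n ?mulr1n
    ?gmap0 ?gmap1 ?subr0 ?addr0.
- by rewrite (circ_fix (valP u2)) valD.
- by rewrite -lamE lamt sb_addA -valD /phi_fun addrA.
- by rewrite (circ_fix (valP u2)) E3.
- by rewrite -lamE lamt E4 hFt /phi_fun /zF alg3.
Qed.


Lemma forward : exists (F : finZmodType) (y z : F) (phi : {additive F -> F}),
    (exists f : F, f != 0) /\
    y *+ 2 = 0 /\
    phi z = phi y - z *+ 2 /\
    (forall f : F, phi (phi f) = - (phi f *+ 2)) /\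
    (forall g : F, exists (f : F) (k1 k2 : 'Z_2), model_psi phi z f k1 k2 = g) /\
    sb_iso_to A (model_add y) (model_circ y (model_psi phi z)).
Proof.
exists (Fty : finZmodType), yF, zF, (phi_fun : {additive Fty -> Fty}).
split; first exact: F_nontriv.
split; first exact: y2.
split; first exact: hFz.
split; first exact: phiphi.
split; first exact: psi_surj.
exists fmap; split; first by exists gmap; [exact: fmapK | exact: gmapK].
move=> a b; split.
  by rewrite -{1}(fmapK a) -{1}(fmapK b) -gadd gmapK.
by rewrite -{1}(fmapK a) -{1}(fmapK b) -gcirc gmapK.
Qed.
End Forward.

End SBFwd.
Import SBFwd.

Module SBBwd.
Local Open Scope ring_scope.

Section Backward.
Variables (F : zmodType) (y z : F) (phi : {additive F -> F}).
Variables (T : finType) (A : skew_brace T) (f : T -> F * 'Z_2) (g : F * 'Z_2 -> T).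
Local Notation "x ⊕ y" := (sb_add A x y) (at level 50, left associativity).
Local Notation "x ⊙ y" := (sb_circ A x y) (at level 40, left associativity).
Local Notation lam := (sb_lambda A).
Local Notation psi := (model_psi phi z).
Hypotheses (fK : cancel f g) (gK : cancel g f).
Hypothesis fadd : forall a b, f (a ⊕ b) = model_add y (f a) (f b).
Hypothesis fcirc : forall a b, f (a ⊙ b) = model_circ y psi (f a) (f b).
Hypothesis hsurj : forall w : F, exists (f1 : F) (k1 k2 : 'Z_2), psi f1 k1 k2 = w.
Variables (f0 : F) (hf0 : f0 != 0).

Lemma sgnZ0 (k : 'Z_2) : sgnZ2 k (0 : F) = 0.
Proof. by rewrite /sgnZ2 mul0rz. Qed.

Lemma f_lam a b : f (lam a b) = ((f b).1 + sgnZ2 (f a).2 (psi (f a).1 (f a).2 (f b).2), (f b).2).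
Proof.
have := fcirc a b; rewrite -lamE fadd.
case: (f a) => f1 k1; case: (f b) => f2 k2; case: (f (lam a b)) => g1 k.
rewrite /model_add /model_circ => e.
have e2 : k1 + k = k1 + k2 := congr1 snd e.
have e1 := congr1 fst e; rewrite /= in e1.
have ek : k = k2 by apply: (addrI k1).
subst k; move/addIr: e1; rewrite -addrA => /addrI.
case: (Z2_cases k1) => ->; rewrite ?sgn0 ?sgn1.
  by move=> ->.
by move=> e3; congr (_, _); rewrite -[g1]opprK e3 opprD opprK.
Qed.


Lemma psi_rep w : exists f1 k1, sgnZ2 k1 (psi f1 k1 1) = w.
Proof.
have [f' [k1 [k2 e]]] := hsurj (- w).
case: (Z2_cases k2) e => ->; rewrite /model_psi ?Z2v0 ?Z2v1 ?mulr0n ?mulr1n.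
  move/eqP; rewrite eq_sym oppr_eq0 => /eqP ->.
  by exists 0, 0; rewrite sgn0 /model_psi ?Z2v0 ?Z2v1 mulr0n subr0 mulr1n raddf0.
case: (Z2_cases k1) => ->; rewrite ?Z2v0 ?Z2v1 ?mulr0n ?mulr1n ?subr0 => e.
  by exists (- f'), 0; rewrite sgn0 /model_psi ?Z2v0 ?Z2v1 mulr0n subr0 mulr1n raddfN e opprK.
by exists f', 1; rewrite sgn1 /model_psi ?Z2v1 !mulr1n e opprK.
Qed.

Definition V1 : {set T} := [set x | (f x).2 == 1].

Lemma orbit0 b : (f b).2 = 0 -> lambda_orbit A b = [set b].
Proof.
move=> hb; apply: orbit_fix; apply/fixP => a.
apply: (can_inj fK); rewrite f_lam hb /model_psi Z2v0 mulr0n sgnZ0 addr0.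
by case: (f b) hb => ? ? /= ->.
Qed.

Lemma orbit1 b : (f b).2 = 1 -> lambda_orbit A b = V1.
Proof.
move=> hb; apply/setP => x; rewrite inE; apply/imsetP/eqP.
  by move=> [a _ ->]; rewrite f_lam.
move=> hx.
have [f1 [k1 e]] := psi_rep ((f x).1 - (f b).1).
exists (g (f1, k1)) => //.
apply: (can_inj fK); rewrite f_lam gK /= hb e addrC subrK.
by case: (f x) hx => ? ? /= ->.
Qed.

Lemma V1_card : (1 < #|V1|)%N.
Proof.
rewrite (cardsD1 (g (0, 1))) inE gK eqxx add1n ltnS card_gt0.
apply/set0Pn; exists (g (f0, 1)); rewrite !inE gK eqxx andbT.
apply/negP => /eqP /(can_inj gK) [] /eqP; exact/negP.
Qed.

Lemma vertices_one : #|Lambda_vertices A| = 1%N.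
Proof.
apply/eqP/cards1P; exists V1; apply/setP => L; rewrite !inE.
apply/andP/eqP.
  move=> [/imsetP [b _ ->] hc].
  case: (Z2_cases (f b).2) => hb; last exact: orbit1.
  by move: hc; rewrite orbit0 // cards1.
move=> ->; split; last exact: V1_card.
apply/imsetP; exists (g (0, 1)) => //; rewrite orbit1 ?gK //.
Qed.
End Backward.

End SBBwd.
Import SBBwd.

Local Open Scope ring_scope.

Theorem mainTheorem16 (T : finType) (A : skew_brace T) :
  #|Lambda_vertices A|%N = 1%N <->
  exists (F : finZmodType) (y z : F) (phi : {additive F -> F}),
    (exists f : F, f != 0) /\
    y *+ 2 = 0 /\
    phi z = phi y - z *+ 2 /\
    (forall f : F, phi (phi f) = - (phi f *+ 2)) /\
    (forall g : F, exists (f : F) (k1 k2 : 'Z_2), model_psi phi z f k1 k2 = g) /\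
    sb_iso_to A (model_add y) (model_circ y (model_psi phi z)).
Proof.
split.
  move=> h1; have /cards1P [L hL] : #|Lambda_vertices A| == 1%N by apply/eqP.
  have : L \in Lambda_vertices A by rewrite hL set11.
  rewrite !inE => /andP [/imsetP [t _ eL] hc].
  rewrite eL in hc.
  have ht : t \notin lfix A.
    by apply: contraL hc => /orbit_fix ->; rewrite cards1.
  have hO : forall x, x \notin lfix A -> x \in lambda_orbit A t.
    move=> x hx.
    have : lambda_orbit A x \in Lambda_vertices A.
      by rewrite !inE (orbit_nfix hx) andbT; apply/imsetP; exists x.
    by rewrite hL inE => /eqP e; rewrite -eL -e orbit_self.
  exact: (@forward T A t ht hO).
move=> [F [y [z [phi [[f0 hf0] [_ [_ [_ [hsurj [f [[g fK gK] hf]]]]]]]]]]].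
apply: (@vertices_one F y z phi T A f g fK gK _ _ hsurj f0 hf0).
  by move=> a b; case: (hf a b).
by move=> a b; case: (hf a b).
Qed.
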